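(* For all $\alpha\in(0,1)$ and all integers $s=1,2,3,\dots$, $$\frac{1-\alpha}{(s+1)^\alpha}<a_s<\frac{1-\alpha}{s^\alpha},\qquad \frac{\alpha(1-\alpha)}{(s+2)^{\alpha+1}}<a_s-a_{s+1}<\frac{\alpha(1-\alpha)}{s^{\alpha+1}},\qquad \frac{\alpha(1-\alpha)}{12(s+1)^{\alpha+1}}<b_s<\frac{\alpha(1-\alpha)}{12 s^{\alpha+1}}.$$
   Context: For $l\ge 0$: $a_l=a_l^{(\alpha)}=(l+1)^{1-\alpha}-l^{1-\alpha}$ and $b_l=b_l^{(\alpha)}=\frac{1}{2-\alpha}\left[(l+1)^{2-\alpha}-l^{2-\alpha}\right]-\frac12\left[(l+1)^{1-\alpha}+l^{1-\alpha}\right]$. *)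

(* Defs.v *)
From Stdlib Require Import Reals.
Open Scope R_scope.

(* x^p for x >= 0 and real p > 0; we set 0^p = 0 (Rpower 0 p would be 1). *)
Definition rpow (x p : R) : R := if Rle_dec x 0 then 0 else Rpower x p.

Definition a_coef (alpha : R) (l : nat) : R :=
  rpow (INR l + 1) (1 - alpha) - rpow (INR l) (1 - alpha).

Definition b_coef (alpha : R) (l : nat) : R :=
  / (2 - alpha) * (rpow (INR l + 1) (2 - alpha) - rpow (INR l) (2 - alpha))
  - / 2 * (rpow (INR l + 1) (1 - alpha) + rpow (INR l) (1 - alpha)).

(* Main.v *)
Require Import Defs.
From Stdlib Require Import Reals Lra.
From Coquelicot Require Import Coquelicot.
Open Scope R_scope.
Definition P (e x : R) := Rpower x e.

Lemma dP e x : 0 < x -> is_derive (fun y => P e y) x (e * P (e-1) x).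
Proof. intros H. apply is_derive_Reals. now apply derivable_pt_lim_power. Qed.
Lemma DP e x : 0 < x -> Derive (fun y => P e y) x = e * P (e-1) x.
Proof. intros H. apply is_derive_unique, dP, H. Qed.
Lemma exP e x : 0 < x -> ex_derive (fun y => P e y) x.
Proof. intros H. eexists. apply dP, H. Qed.
Lemma Pe e1 e2 : e1 = e2 -> forall x, P e1 x = P e2 x.
Proof. now intros -> x. Qed.
Lemma Ppos e x : 0 < P e x.
Proof. apply exp_pos. Qed.
Lemma Pmono e x y : 0 < e -> 0 < x < y -> P e x < P e y.
Proof. intros. now apply Rlt_Rpower_l. Qed.
Lemma Popp e x : P (- e) x = / P e x.
Proof. apply Rpower_Ropp. Qed.
Lemma Pinv_lt e x y : 0 < e -> 0 < x < y -> / P e y < / P e x.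
Proof. intros. apply Rinv_lt_contravar. apply Rmult_lt_0_compat; apply Ppos. now apply Pmono. Qed.

Lemma mvt f f' a b : a < b -> (forall c, a <= c <= b -> is_derive f c (f' c)) ->
  exists c, a < c < b /\ f b - f a = f' c * (b - a).
Proof.
  intros Hab Hd. destruct (MVT_cor2 f f' a b Hab) as [c [H1 H2]].
  - intros c Hc. apply is_derive_Reals, Hd, Hc.
  - exists c; split; auto.
Qed.

Lemma second_order F F1 F2 a b : a < b ->
  (forall x, a <= x <= b -> is_derive F x (F1 x)) ->
  (forall x, a <= x <= b -> is_derive F1 x (F2 x)) ->
  F a = 0 -> F1 a = 0 -> (forall x, a < x < b -> 0 < F2 x) -> 0 < F b.
Proof.
  intros Hab d1 d2 Fa F1a Hp.
  destruct (mvt F F1 a b Hab d1) as [c [Hc Ec]].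
  assert (Hac : a < c) by lra.
  destruct (mvt F1 F2 a c Hac) as [d [Hd Ed]].
  { intros x Hx. apply d2. lra. }
  assert (0 < F2 d) by (apply Hp; lra).
  assert (0 < F1 c).
  { rewrite F1a in Ed. assert (F1 c = F2 d * (c - a)) by lra. rewrite H0.
    apply Rmult_lt_0_compat; lra. }
  assert (F b = F1 c * (b - a)) by lra. rewrite H1. apply Rmult_lt_0_compat; lra.
Qed.
Lemma rpowP x p : 0 < x -> rpow x p = P p x.
Proof. intros H. unfold rpow. destruct (Rle_dec x 0); [lra|reflexivity]. Qed.

Lemma part1 al S : 0 < al < 1 -> 1 <= S ->
  (1 - al) / P al (S + 1) < P (1-al) (S+1) - P (1-al) S < (1 - al) / P al S.
Proof.
  intros Ha HS.
  destruct (mvt (fun y => P (1-al) y) (fun y => (1-al) * P (1-al-1) y) S (S+1)) as [c [Hc Ec]].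
  - lra.
  - intros c Hc. apply dP. lra.
  - assert (Hq: 1-al-1 = -al) by ring. rewrite Ec, (Pe _ _ Hq), Popp.
    replace (S+1-S) with 1 by ring. rewrite Rmult_1_r. unfold Rdiv.
    split; apply Rmult_lt_compat_l; try lra; apply Pinv_lt; lra.
Qed.

Lemma part2 al S : 0 < al < 1 -> 1 <= S ->
  al * (1 - al) / P (al+1) (S + 2) <
   (P (1-al) (S+1) - P (1-al) S) - (P (1-al) (S+1+1) - P (1-al) (S+1))
  < al * (1 - al) / P (al+1) S.
Proof.
  intros Ha HS.
  destruct (mvt (fun y => P (1-al) (y+1) - P (1-al) y)
     (fun y => (1-al) * P (-al) (y+1) - (1-al) * P (-al) y) S (S+1)) as [c [Hc Ec]].
  - lra.
  - intros c Hc. auto_derive. { split; [apply exP; lra|split; [apply exP; lra| easy]]. }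
    assert (Hq: 1-al-1 = -al) by ring. rewrite !DP by lra. rewrite !(Pe _ _ Hq). ring.
  - destruct (mvt (fun y => (1-al) * P (-al) y)
     (fun y => (1-al) * ((-al) * P (-al-1) y)) c (c+1)) as [d [Hd Ed]].
    + lra.
    + intros x Hx. auto_derive. { apply exP; lra. }
      rewrite !DP by lra. ring.
    + replace (S+1+1) with (S+1+1) by ring.
      assert (E : (P (1-al) (S+1) - P (1-al) S) - (P (1-al) (S+1+1) - P (1-al) (S+1))
        = al * (1-al) * P (-al-1) d).
      { replace (c+1-c) with 1 in Ed by ring. replace (S+1-S) with 1 in Ec by ring. nra. }
      assert (Hq: -al-1 = -(al+1)) by ring. rewrite E, (Pe _ _ Hq), Popp. unfold Rdiv.
      split; apply Rmult_lt_compat_l; try nra; apply Pinv_lt; lra.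
Qed.
Section P3.
Variables al S0 : R.
Hypothesis Ha : 0 < al < 1.
Hypothesis HS : 1 <= S0.
Definition E x := /(2-al)*(P (2-al) x - P (2-al) S0) - /2*((x-S0)*(P (1-al) S0 + P (1-al) x)).
Definition E1 x := (P (1-al) x - P (1-al) S0)/2 - (x-S0)/2*((1-al)*P (-al) x).
Definition E2 x := (x-S0)/2*(al*(1-al)*P (-al-1) x).
Lemma dE x : 0 < x -> is_derive E x (E1 x).
Proof. intros Hx. unfold E, E1. auto_derive.
  { split; [apply exP; lra| split; [apply exP; lra| easy]]. }
  rewrite !DP by lra.
  assert (Hq: 2-al-1 = 1-al) by ring. assert (Hq2: 1-al-1 = -al) by ring.
  rewrite !(Pe _ _ Hq), !(Pe _ _ Hq2). field. lra. Qed.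
Lemma dE1 x : 0 < x -> is_derive E1 x (E2 x).
Proof. intros Hx. unfold E1, E2. auto_derive.
  { split; [apply exP; lra| split; [apply exP; lra| easy]]. }
  rewrite !DP by lra.
  assert (Hq2: 1-al-1 = -al) by ring.
  rewrite !(Pe _ _ Hq2). field. Qed.
Lemma comp3 K (F F1 F2 : R -> R) (sg : R) :
  (forall x, 0 < x -> is_derive F x (F1 x)) -> (forall x, 0 < x -> is_derive F1 x (F2 x)) ->
  (forall x, 0 < x -> is_derive (fun x => sg * (K*(x-S0)^3/12 - F x)) x (sg * (K*(x-S0)^2/4 - F1 x))) /\
  (forall x, 0 < x -> is_derive (fun x => sg * (K*(x-S0)^2/4 - F1 x)) x (sg * (K*(x-S0)/2 - F2 x))).
Proof. intros d1 d2. split; intros x Hx; auto_derive.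
  - eexists; apply d1; lra.
  - replace (Derive (fun x0 => F x0) x) with (F1 x) by (symmetry; apply is_derive_unique, d1, Hx); field.
  - eexists; apply d2; lra.
  - replace (Derive (fun x0 => F1 x0) x) with (F2 x) by (symmetry; apply is_derive_unique, d2, Hx); field.
Qed.
Lemma Pdec x y : 0 < x < y -> P (-al-1) y < P (-al-1) x.
Proof. intros H. assert (Hq: -al-1 = -(al+1)) by ring. rewrite !(Pe _ _ Hq), !Popp.
  apply Pinv_lt; lra. Qed.
Lemma part3 :
  al*(1-al)/(12*P (al+1) (S0+1)) < /(2-al)*(P (2-al) (S0+1) - P (2-al) S0) - /2*(P (1-al) (S0+1) + P (1-al) S0)
  < al*(1-al)/(12*P (al+1) S0).
Proof.
  assert (Hq: -al-1 = -(al+1)) by ring.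
  assert (HE : E (S0+1) = /(2-al)*(P (2-al) (S0+1) - P (2-al) S0) - /2*(P (1-al) (S0+1) + P (1-al) S0))
    by (unfold E; ring).
  rewrite <- HE. split.
  - set (K := al*(1-al)*P (-al-1) (S0+1)).
    destruct (comp3 K E E1 E2 (-1) dE dE1) as [c1 c2].
    assert (H := second_order _ _ (fun x => (-1) * (K*(x-S0)/2 - E2 x)) S0 (S0+1) ltac:(lra)
      (fun x Hx => c1 x ltac:(lra)) (fun x Hx => c2 x ltac:(lra))).
    cbv beta in H. assert (HH: 0 < -1 * (K * (S0 + 1 - S0) ^ 3 / 12 - E (S0 + 1))).
    { apply H.
      - match goal with |- ?a = ?b => change (a = b :> R) end; unfold E, K; field; lra.
      - match goal with |- ?a = ?b => change (a = b :> R) end; unfold E1, K; field.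
      - intros x Hx. unfold E2, K.
        replace (-1 * (al * (1 - al) * P (- al - 1) (S0 + 1) * (x - S0) / 2 -
          (x - S0) / 2 * (al * (1 - al) * P (- al - 1) x)))
          with ((x-S0)/2*(al*(1-al))*(P (-al-1) x - P (-al-1) (S0+1))) by field.
        assert (P (-al-1) (S0+1) < P (-al-1) x) by (apply Pdec; lra).
        apply Rmult_lt_0_compat; [apply Rmult_lt_0_compat|]; nra. }
    unfold K in HH. rewrite (Pe _ _ Hq), Popp in HH.
    assert (0 < P (al+1) (S0+1)) by apply Ppos.
    replace (al*(1-al)/(12*P (al+1) (S0+1))) with (al * (1 - al) * / P (al + 1) (S0 + 1) * (S0 + 1 - S0) ^ 3 / 12)
      by (field; lra). lra.
  - set (K := al*(1-al)*P (-al-1) S0).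
    destruct (comp3 K E E1 E2 1 dE dE1) as [c1 c2].
    assert (H := second_order _ _ (fun x => 1 * (K*(x-S0)/2 - E2 x)) S0 (S0+1) ltac:(lra)
      (fun x Hx => c1 x ltac:(lra)) (fun x Hx => c2 x ltac:(lra))).
    cbv beta in H. assert (HH: 0 < 1 * (K * (S0 + 1 - S0) ^ 3 / 12 - E (S0 + 1))).
    { apply H.
      - match goal with |- ?a = ?b => change (a = b :> R) end; unfold E, K; field; lra.
      - match goal with |- ?a = ?b => change (a = b :> R) end; unfold E1, K; field.
      - intros x Hx. unfold E2, K.
        replace (1 * (al * (1 - al) * P (- al - 1) S0 * (x - S0) / 2 -
          (x - S0) / 2 * (al * (1 - al) * P (- al - 1) x)))
          with ((x-S0)/2*(al*(1-al))*(P (-al-1) S0 - P (-al-1) x)) by field.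
        assert (P (-al-1) x < P (-al-1) S0) by (apply Pdec; lra).
        apply Rmult_lt_0_compat; [apply Rmult_lt_0_compat|]; nra. }
    unfold K in HH. rewrite (Pe _ _ Hq), Popp in HH.
    assert (0 < P (al+1) S0) by apply Ppos.
    replace (al*(1-al)/(12*P (al+1) S0)) with (al * (1 - al) * / P (al + 1) S0 * (S0 + 1 - S0) ^ 3 / 12)
      by (field; lra). lra.
Qed.
End P3.

Theorem lemma2 (alpha : R) (s : nat) :
  0 < alpha < 1 -> (1 <= s)%nat ->
  ((1 - alpha) / Rpower (INR s + 1) alpha < a_coef alpha s
     < (1 - alpha) / Rpower (INR s) alpha) /\
  (alpha * (1 - alpha) / Rpower (INR s + 2) (alpha + 1)
     < a_coef alpha s - a_coef alpha (S s)
     < alpha * (1 - alpha) / Rpower (INR s) (alpha + 1)) /\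
  (alpha * (1 - alpha) / (12 * Rpower (INR s + 1) (alpha + 1)) < b_coef alpha s
     < alpha * (1 - alpha) / (12 * Rpower (INR s) (alpha + 1))).
Proof.
  intros Ha Hs.
  assert (H1 : 1 <= INR s) by (apply (le_INR 1); exact Hs).
  pose proof (part1 alpha (INR s) Ha H1) as p1.
  pose proof (part2 alpha (INR s) Ha H1) as p2.
  pose proof (part3 alpha (INR s) Ha H1) as p3.
  unfold a_coef, b_coef. rewrite S_INR.
  rewrite !rpowP by lra.
  unfold P in *. repeat split; tauto.
Qed.
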